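(* Let $q\ge2$, $n\ge1$, $\tau\ge0$, and let $m$ be an integer with $m\in[n-\tau n,n+\tau n]$. Let $\mathbf r\in R_q(m)$ be a constant word and suppose $\kappa^\ast=\frac{\tau n+n-m}{2n}\le\frac{q-1}{q}$. Then $$|\mathcal{B}(\mathbf r,\tau n)\cap\Sigma_q^n|=q^{n\left(H_q(\kappa^\ast)+O\left(\frac{\log_q n}{n}\right)\right)}.$$
   Context: $\Sigma_q$ is a finite alphabet of size $q$. $R_q(m)=\{(\alpha,\alpha,\dots,\alpha)\in\Sigma_q^m:\alpha\in\Sigma_q\}$. The insdel distance $d(\mathbf a,\mathbf b)$ between words (lengths may differ) is the minimum number of single-symbol insertions and deletions needed to transform $\mathbf a$ into $\mathbf b$. For $\mathbf u\in\Sigma_q^m$ and real $z\ge0$, $\mathcal{B}(\mathbf u,z)=\{\mathbf v\in\bigcup_{i=\max\{m-z,0\}}^{m+z}\Sigma_q^i: d(\mathbf u,\mathbf v)\le z\}$. $H_q(x)=x\log_q(q-1)-x\log_qx-(1-x)\log_q(1-x)$ for $0<x<1$, $H_q(0)=H_q(1)=0$. *)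

(* Defs.v *)
From Stdlib Require Import Reals ClassicalEpsilon.
From mathcomp Require Import all_boot.

Set Implicit Arguments.
Unset Strict Implicit.
Unset Printing Implicit Defensive.

Definition pb (P : Prop) : bool :=
  if excluded_middle_informative P then true else false.

Definition ins_at {T : Type} (i : nat) (x : T) (s : seq T) : seq T :=
  take i s ++ x :: drop i s.

Definition insdel_step {T : Type} (a b : seq T) : Prop :=
  (exists i x, b = ins_at i x a) \/ (exists i x, a = ins_at i x b).

Fixpoint insdel_reach {T : Type} (k : nat) (a b : seq T) : Prop :=
  match k with
  | 0 => a = b
  | k'.+1 => exists c, insdel_step a c /\ insdel_reach k' c b
  end.

(* The minimum is taken over
   k <= size a + size b; the value size a + size b (delete everything,
   insert everything) is always achievable, so it is the correct default. *)
Definition insdel_dist {T : Type} (a b : seq T) : nat :=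
  \big[minn/(size a + size b)]_(k < (size a + size b).+1
                                 | pb (insdel_reach k a b)) k.

Definition const_word (q : nat) (alpha : 'I_q) (m : nat) : seq 'I_q :=
  nseq m alpha.

Definition ball_count_n (q : nat) (u : seq 'I_q) (z : R) (n : nat) : nat :=
  #|[set v : n.-tuple 'I_q | pb (Rle (INR (insdel_dist u (val v))) z)]|.

Open Scope R_scope.

Definition logq (q : nat) (x : R) : R := ln x / ln (INR q).

(* q-ary entropy; H_q(0) = H_q(1) = 0 (and 0 outside (0,1), never used) *)
Definition Hq (q : nat) (x : R) : R :=
  if pb (0 < x < 1) then
    x * logq q (INR q - 1) - x * logq q x - (1 - x) * logq q (1 - x)
  else 0.

(* Main.v *)
Require Import Defs.
From Stdlib Require Import Reals ClassicalEpsilon Lra Lia.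
From mathcomp Require Import all_boot ssralg ring zify.
Local Open Scope nat_scope.

Section Insdel.
Variable T : eqType.

Lemma reach_trans {k l} {a b c : seq T} :
  insdel_reach k a b -> insdel_reach l b c -> insdel_reach (k + l) a c.
Proof.
elim: k a => [|k IH] a /=; first by move=> ->.
by move=> [d [Hs Hr]] Hl; exists d; split => //; apply: IH Hr Hl.
Qed.

Lemma step_sym (a b : seq T) : insdel_step a b -> insdel_step b a.
Proof. by case=> H; [right|left]. Qed.

Lemma reach_sym k (a b : seq T) : insdel_reach k a b -> insdel_reach k b a.
Proof.
elim: k a b => [|k IH] a b /=; first by move=> ->.
move=> [c [Hs Hr]].
have H1 : insdel_reach 1 c a by exists a; split => //; apply: step_sym.
by have := reach_trans (IH _ _ Hr) H1; rewrite addn1.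
Qed.

Lemma reach_cons k x (a b : seq T) :
  insdel_reach k a b -> insdel_reach k (x :: a) (x :: b).
Proof.
elim: k a => [|k IH] a /=; first by move=> ->.
move=> [c [Hs Hr]]; exists (x :: c); split; last exact: IH.
case: Hs => [[i [y ->]]|[i [y ->]]]; [left|right]; exists i.+1, y; by [].
Qed.

Lemma reach_nseq (al : T) (s : seq T) j :
  j <= count_mem al s -> insdel_reach (size s - j) (nseq j al) s.
Proof.
elim: s j => [|x s IH] j /=.
  by rewrite leqn0 => /eqP ->.
case: j => [|j].
  move=> _; rewrite subn0.
  have := IH 0 (leq0n _); rewrite subn0 => H.
  have H1 : insdel_reach 1 s (x :: s).
    by exists (x :: s); split => //; left; exists 0, x; rewrite /ins_at take0 drop0.
  by have := reach_trans H H1; rewrite addn1.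
case: (eqVneq x al) => [->|ne].
  rewrite add1n ltnS => Hj; rewrite subSS; exact: reach_cons (IH _ Hj).
rewrite add0n => Hj.
have Hs : j.+1 <= size s by apply: leq_trans Hj (count_size _ _).
have := IH _ Hj; move=> H.
have -> : (size s).+1 - j.+1 = (size s - j.+1) + 1 by lia.
apply: reach_trans H _.
by exists (x :: s); split => //; left; exists 0, x; rewrite /ins_at take0 drop0.
Qed.

Definition Dist (al : T) m (s : seq T) :=
  (m - minn m (count_mem al s)) + (size s - minn m (count_mem al s)).

Lemma count_ins al i x (s : seq T) :
  count_mem al (ins_at i x s) = (x == al) + count_mem al s.
Proof.
rewrite /ins_at count_cat /= -{3}(cat_take_drop i s) count_cat; lia.
Qed.

Lemma size_ins i x (s : seq T) : size (ins_at i x s) = (size s).+1.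
Proof. by rewrite /ins_at size_cat /= -{3}(cat_take_drop i s) size_cat addnS. Qed.

Lemma Dist_ins al m i x (s : seq T) :
  Dist al m (ins_at i x s) <= Dist al m s + 1 /\
  Dist al m s <= Dist al m (ins_at i x s) + 1.
Proof.
rewrite /Dist count_ins size_ins.
have := count_size (pred1 al) s.
case: (x == al) => /=; lia.
Qed.

Lemma Dist_reach al m k (a b : seq T) :
  insdel_reach k a b -> Dist al m b <= Dist al m a + k.
Proof.
elim: k a => [|k IH] a /=; first by move=> ->; rewrite addn0.
move=> [c [Hs Hr]]; have := IH _ Hr.
have : Dist al m c <= Dist al m a + 1.
  case: Hs => [[i [y ->]]|[i [y ->]]].
    by case: (Dist_ins al m i y a).
  by case: (Dist_ins al m i y c).
lia.
Qed.

Lemma pbP (P : Prop) : reflect P (pb P).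
Proof. rewrite /pb; case: excluded_middle_informative => H; by constructor. Qed.

Lemma bigmin_le_seq (I : eqType) (r : seq I) (P : pred I) (F : I -> nat) x j :
  j \in r -> P j -> \big[minn/x]_(i <- r | P i) F i <= F j.
Proof.
elim: r => [|y r IH] //=; rewrite inE big_cons => /orP [/eqP <-|Hj] Pj.
  by rewrite Pj geq_minl.
case: (P y); last exact: IH.
by apply: leq_trans (geq_minr _ _) (IH Hj Pj).
Qed.

Lemma insdel_dist_nseq (al : T) m (s : seq T) :
  insdel_dist (nseq m al) s = Dist al m s.
Proof.
have D0 : Dist al m (nseq m al) = 0.
  by rewrite /Dist count_nseq /= eqxx mul1n size_nseq minnn subnn.
apply/eqP; rewrite eqn_leq; apply/andP; split.
  rewrite /insdel_dist size_nseq.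
  have Hlt : Dist al m s < (m + size s).+1.
    rewrite /Dist ltnS; lia.
  have := @bigmin_le_seq _ (index_enum 'I_(m + size s).+1)
     (fun k : 'I_(m + size s).+1 => pb (insdel_reach k (nseq m al) s)) (fun k => val k)
     (m + size s) (Ordinal Hlt).
  rewrite mem_index_enum => H; apply: H => //=.
  apply/pbP.
  set j := minn m (count_mem al s).
  have := reach_nseq al (nseq m al) j.
  rewrite count_nseq /= eqxx mul1n size_nseq => H1.
  have := reach_nseq al s j => H2.
  rewrite /Dist -/j; exact: reach_trans (reach_sym _ _ _ (H1 (geq_minl _ _))) (H2 (geq_minr _ _)).
rewrite /insdel_dist size_nseq.
apply: (big_ind (fun x => Dist al m s <= x)).
- rewrite /Dist; lia.
- by move=> x y Hx Hy; rewrite leq_min Hx Hy.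
move=> i /pbP H; have := Dist_reach al m _ _ _ H; rewrite D0; lia.
Qed.
End Insdel.
Arguments Dist {T}.
Arguments insdel_dist_nseq {T}.

Lemma sum_tupleS (T : finType) n (F : n.+1.-tuple T -> nat) :
  \sum_(t : n.+1.-tuple T) F t = \sum_(x : T) \sum_(t : n.-tuple T) F [tuple of x :: t].
Proof.
rewrite pair_big /=.
rewrite (reindex (fun p : T * n.-tuple T => [tuple of p.1 :: p.2])) /=.
  by apply: eq_bigr => -[x t].
exists (fun t => (thead t, [tuple of behead t])) => [[x t] _|t _] /=.
  by congr pair; apply: val_inj.
by rewrite [RHS]tuple_eta.
Qed.

Section Count.
Variable q : nat.
Variable al : 'I_q.
Hypothesis Hq : 0 < q.

Definition cnt n j := \sum_(t : n.-tuple 'I_q) (count (predC1 al) t == j).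

Lemma cnt0 j : cnt 0 j = (j == 0).
Proof.
rewrite /cnt (eq_bigr (fun _ => nat_of_bool (count (predC1 al) ([tuple] : 0.-tuple 'I_q) == j))).
  by rewrite sum_nat_const card_tuple expn0 mul1n /= eq_sym.
by move=> t _; rewrite [t]tuple0.
Qed.

Lemma cntS n j : cnt n.+1 j.+1 = cnt n j.+1 + (q - 1) * cnt n j.
Proof.
rewrite /cnt sum_tupleS (bigD1 al) //=; congr addn.
  by apply: eq_bigr => t _ /=; rewrite eqxx add0n.
rewrite (eq_bigr (fun _ => cnt n j)).
  by rewrite sum_nat_const cardC1 card_ord subn1.
move=> x Hx; apply: eq_bigr => t _ /=; by rewrite Hx add1n eqSS.
Qed.

Lemma cntS0 n : cnt n.+1 0 = cnt n 0.
Proof.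
rewrite /cnt sum_tupleS (bigD1 al) //= [X in _ + X]big1 ?addn0.
  by apply: eq_bigr => t _ /=; rewrite eqxx add0n.
move=> x Hx; apply: big1 => t _ /=; by rewrite Hx.
Qed.

Lemma cntE n j : cnt n j = 'C(n, j) * (q - 1) ^ j.
Proof.
elim: n j => [|n IH] j.
  by rewrite cnt0 bin0n; case: j.
case: j => [|j]; first by rewrite cntS0 IH !bin0.
rewrite cntS !IH binS expnS; ring.
Qed.

Lemma le_sum_eq c K : nat_of_bool (c <= K) = \sum_(j < K.+1) (c == j).
Proof.
elim: K => [|K IH]; first by rewrite big_ord_recr big_ord0 leqn0.
rewrite big_ord_recr /= -IH.
case: (ltngtP c K.+1) => H.
- by rewrite -ltnS H.
- by rewrite leqNgt (ltnW H).
- by rewrite H ltnn.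
Qed.

Lemma card_le n K :
  #|[set v : n.-tuple 'I_q | count (predC1 al) v <= K]| = \sum_(j < K.+1) cnt n j.
Proof.
rewrite -sum1_card big_mkcond /=.
rewrite (eq_bigr (fun v : n.-tuple 'I_q => \sum_(j < K.+1) (count (predC1 al) v == j))).
  by rewrite exchange_big.
by move=> v _; rewrite inE -le_sum_eq; case: (_ <= _).
Qed.

Definition F n j := 'C(n, j) * (q - 1) ^ j.

Lemma F_mono n j : j.+1 * q <= n * (q - 1) -> F n j <= F n j.+1.
Proof.
move=> H.
have E : j.+1 * F n j.+1 = (n - j) * (q - 1) * F n j.
  by rewrite /F mulnA mul_bin_left expnS; ring.
have Hj : j.+1 <= (n - j) * (q - 1).
  move: H; have -> : q = (q - 1).+1 by lia.
  rewrite subSS subn0; set r := q - 1 => H.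
  rewrite mulnBl; move: H; rewrite mulSn mulnS; lia.
rewrite -(@leq_pmul2l j.+1) // E leq_mul2r Hj orbT //.
Qed.

Lemma F_le n j K : j <= K -> K * q <= n * (q - 1) -> F n j <= F n K.
Proof.
elim: K => [|K IH]; first by rewrite leqn0 => /eqP ->.
rewrite leq_eqVlt => /orP [/eqP -> //|]; rewrite ltnS => HjK HK.
apply: leq_trans (IH HjK _) (F_mono _ _ HK).
apply: leq_trans HK; rewrite leq_mul2r; by rewrite leqnSn orbT.
Qed.

Lemma sum_F_lo n K : F n K <= \sum_(j < K.+1) F n j.
Proof. by rewrite big_ord_recr /= leq_addl. Qed.

Lemma sum_F_hi n K : K * q <= n * (q - 1) -> \sum_(j < K.+1) F n j <= K.+1 * F n K.
Proof.
move=> HK; apply: (@leq_trans (\sum_(j < K.+1) F n K)).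
  by apply: leq_sum => j _; apply: F_le => //; rewrite -ltnS.
by rewrite sum_nat_const card_ord.
Qed.
End Count.

Section Mode.
Variables n K : nat.
Hypothesis HKn : K <= n.
Definition Tm j := 'C(n, j) * ((n - K) ^ (n - j) * K ^ j).

Lemma Tm_sum : \sum_(j < n.+1) Tm j = n ^ n.
Proof. by rewrite /Tm -expnDn subnK. Qed.

Lemma Tm_step j : j < n ->
  j.+1 * Tm j.+1 = (n - j.+1).+1 * K * ('C(n, j) * (n - K) ^ (n - j.+1) * K ^ j) /\
  j.+1 * Tm j = j.+1 * (n - K) * ('C(n, j) * (n - K) ^ (n - j.+1) * K ^ j).
Proof.
move=> Hj.
have E : n - j = (n - j.+1).+1 by lia.
split.
  by rewrite /Tm mulnA mul_bin_left E expnS; ring.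
by rewrite /Tm E expnS; ring.
Qed.

Lemma Tm_up j : j < K -> Tm j <= Tm j.+1.
Proof.
move=> HjK; have Hj : j < n by apply: leq_trans HjK HKn.
case: (Tm_step j Hj) => E1 E2.
rewrite -(@leq_pmul2l j.+1) // E1 E2 leq_mul2r; apply/orP; right.
rewrite [X in _ <= X]mulnC leq_mul //; lia.
Qed.

Lemma Tm_down j : K <= j -> j < n -> Tm j.+1 <= Tm j.
Proof.
move=> HjK Hj.
case: (Tm_step j Hj) => E1 E2.
rewrite -(@leq_pmul2l j.+1) // E1 E2 leq_mul2r; apply/orP; right.
rewrite [X in X <= _]mulnC leq_mul //; lia.
Qed.

Lemma Tm_max j : j <= n -> Tm j <= Tm K.
Proof.
move=> Hjn.
case: (leqP j K) => H.
  have : forall d, d <= K -> Tm (K - d) <= Tm K.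
    elim=> [|d IH] Hd; first by rewrite subn0.
    apply: leq_trans (IH (ltnW Hd)).
    have -> : K - d = (K - d.+1).+1 by lia.
    apply: Tm_up; lia.
  by move=> /(_ (K - j) (leq_subr _ _)); rewrite subKn.
have : forall d, K + d <= n -> Tm (K + d) <= Tm K.
  elim=> [|d IH] Hd; first by rewrite addn0.
  have Hd' : K + d <= n by lia.
  apply: leq_trans (IH Hd').
  rewrite addnS; apply: Tm_down; lia.
by move=> /(_ (j - K)); rewrite subnKC ?(ltnW H) //; apply.
Qed.

Lemma binom_lo : Tm K <= n ^ n.
Proof.
have HK : K < n.+1 by rewrite ltnS.
by rewrite -Tm_sum (bigD1 (Ordinal HK)) //= leq_addr.
Qed.

Lemma binom_hi : n ^ n <= n.+1 * Tm K.
Proof.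
rewrite -Tm_sum; apply: (@leq_trans (\sum_(j < n.+1) Tm K)).
  by apply: leq_sum => j _; apply: Tm_max; rewrite -ltnS.
by rewrite sum_nat_const card_ord.
Qed.
End Mode.

From Stdlib Require Import Ring Field.
From Stdlib Require ZArith.
Open Scope R_scope.

Lemma ln_le' x y : 0 < x -> x <= y -> ln x <= ln y.
Proof.
move=> Hx Hxy; case: (Rle_lt_or_eq_dec _ _ Hxy) => H.
  by apply: Rlt_le; apply: ln_increasing.
by rewrite H; apply: Rle_refl.
Qed.

Lemma ln_le_sub1 z : 0 < z -> ln z <= z - 1.
Proof.
move=> Hz; have := exp_ineq1_le (ln z); rewrite exp_ln //; lra.
Qed.

Lemma ln_nonneg x : 1 <= x -> 0 <= ln x.
Proof. move=> H; rewrite -ln_1; apply: ln_le' => //; lra. Qed.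

Lemma ln_nonpos x : 0 < x -> x <= 1 -> ln x <= 0.
Proof. move=> H1 H2; rewrite -ln_1; exact: ln_le'. Qed.

Lemma xlnx_mono a b : 0 < a -> a <= b -> 1 <= b -> a * ln a <= b * ln b.
Proof.
move=> Ha Hab Hb.
have H1 : ln a <= ln b by apply: ln_le'.
have H2 : 0 <= ln b by apply: ln_nonneg.
apply: Rle_trans (_ : a * ln b <= _).
  by apply: Rmult_le_compat_l; lra.
by apply: Rmult_le_compat_r.
Qed.

Lemma xlnx_diff a b N : 0 < a -> a <= b -> b < a + 1 -> 1 <= b -> b <= N ->
  b * ln b - a * ln a <= ln N + 1.
Proof.
move=> Ha Hab Hba Hb HbN.
have E : b * ln b - a * ln a = (b - a) * ln b + a * (ln b - ln a) by ring.
have H0 : 0 <= ln b by apply: ln_nonneg.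
have H1 : ln b <= ln N by apply: ln_le'; lra.
have H2 : ln b - ln a <= b / a - 1.
  have -> : ln b - ln a = ln (b / a).
    have Hia : 0 < / a by apply: Rinv_0_lt_compat.
    rewrite /Rdiv ln_mult ?ln_Rinv //; try lra; ring.
  apply: ln_le_sub1; apply: Rdiv_lt_0_compat; lra.
have H3 : a * (ln b - ln a) <= a * (b / a - 1) by apply: Rmult_le_compat_l; lra.
have H4 : a * (b / a - 1) = b - a by field; lra.
have H5 : (b - a) * ln b <= 1 * ln b by apply: Rmult_le_compat_r; lra.
lra.
Qed.

Lemma small_xlnx y : 0 <= y < 1 -> - (y * ln y) <= 1 /\ y * ln y <= 0.
Proof.
move=> [H0 H1]; case: (Rle_lt_or_eq_dec _ _ H0) => Hy; last first.
  by rewrite -Hy; split; lra.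
have Hl : ln y <= 0 by apply: ln_nonpos; lra.
split; last first.
  have : 0 <= y * (- ln y) by apply: Rmult_le_pos; lra.
  lra.
have : ln (/ y) <= / y - 1 by apply: ln_le_sub1; apply: Rinv_0_lt_compat.
rewrite ln_Rinv // => H.
have : y * (- ln y) <= y * (/ y - 1) by apply: Rmult_le_compat_l; lra.
have -> : y * (/ y - 1) = 1 - y by field; lra.
lra.
Qed.

Lemma floor_ex Y : 0 <= Y -> exists K : nat, INR K <= Y < INR K + 1.
Proof.
move=> HY; have [H1 H2] := base_Int_part Y.
have Hz : (0 <= Int_part Y)%Z.
  have : -1 < IZR (Int_part Y) by lra.
  move=> /lt_IZR; lia.
exists (Z.to_nat (Int_part Y)); rewrite INR_IZR_INZ Stdlib.ZArith.Znat.Z2Nat.id //; lra.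
Qed.

Lemma floor_iff k K Y : INR K <= Y < INR K + 1 -> (INR k <= Y <-> (k <= K)%N).
Proof.
move=> [H1 H2]; split => H.
  have : INR k < INR (K + 1) by rewrite plus_INR /=; lra.
  move/INR_lt => /ltP; rewrite addn1 ltnS //.
apply: Rle_trans H1; apply: le_INR; exact/leP.
Qed.

Lemma INR_subn a b : (b <= a)%N -> INR (a - b) = INR a - INR b.
Proof. by move=> /leP H; rewrite minus_INR. Qed.

Lemma INR_addn a b : INR (a + b) = INR a + INR b.
Proof. exact: plus_INR. Qed.

Lemma INR_muln a b : INR (a * b) = INR a * INR b.
Proof. exact: mult_INR. Qed.

Lemma INR_expn a k : INR (a ^ k) = INR a ^ k.
Proof. by elim: k => [|k IH] //; rewrite expnS INR_muln IH. Qed.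

Lemma INR_pos a : (0 < a)%N -> 0 < INR a.
Proof. by move=> /ltP; apply: lt_0_INR. Qed.

Lemma ln_INR_le a b : (0 < a)%N -> (a <= b)%N -> ln (INR a) <= ln (INR b).
Proof. move=> Ha Hab; apply: ln_le' ; [exact: INR_pos | apply: le_INR; exact/leP]. Qed.

Lemma ln_INR_mul a b : (0 < a)%N -> (0 < b)%N -> ln (INR (a * b)) = ln (INR a) + ln (INR b).
Proof. by move=> Ha Hb; rewrite INR_muln ln_mult //; apply: INR_pos. Qed.

Lemma ln_INR_exp a k : (0 < a)%N \/ k = 0%N -> ln (INR (a ^ k)) = INR k * ln (INR a).
Proof.
case=> [Ha|->]; last by rewrite expn0 /= ln_1; ring.
by rewrite INR_expn ln_pow //; apply: INR_pos.
Qed.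

Lemma pb_true (P : Prop) : P -> pb P = true.
Proof. by rewrite /pb; case: excluded_middle_informative. Qed.
Lemma pb_false (P : Prop) : ~ P -> pb P = false.
Proof. by rewrite /pb; case: excluded_middle_informative. Qed.

Lemma Hq_form q nr kap : (2 <= q)%N -> 0 < nr -> 0 <= kap < 1 ->
  nr * Hq q kap * ln (INR q) =
  nr * ln nr + (kap * nr) * ln (INR q - 1) - (kap * nr) * ln (kap * nr)
  - (nr - kap * nr) * ln (nr - kap * nr).
Proof.
move=> Hqq Hnr [Hk0 Hk1].
have Hq2 : 2 <= INR q by apply: (le_INR 2); apply/leP.
have Hlq : ln (INR q) <> 0 by apply: ln_neq_0; lra.
case: (Rle_lt_or_eq_dec _ _ Hk0) => Hk; last first.
  rewrite /Hq pb_false; last lra.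
  rewrite -Hk; replace (nr - 0 * nr) with nr by ring; ring.
rewrite /Hq pb_true; last lra.
rewrite /logq.
have -> : nr - kap * nr = (1 - kap) * nr by ring.
rewrite !ln_mult; try lra.
field; lra.
Qed.

Lemma dist_cond (q : nat) (al : 'I_q) n m (v : seq 'I_q) tau Y :
  size v = n -> INR n - tau * INR n <= INR m -> Y = (tau * INR n + INR n - INR m) / 2 ->
  (INR (Dist al m v) <= tau * INR n <-> INR (count (predC1 al) v) <= Y).
Proof.
move=> Hs Hm HY.
have Hc : (count_mem al v + count (predC1 al) v = n)%N.
  by rewrite -Hs -(count_predC (pred1 al)); congr addn; apply: eq_count.
have HcR : INR (count_mem al v) + INR (count (predC1 al) v) = INR n.
  by rewrite -INR_addn Hc.
rewrite /Dist Hs; case: (leqP m (count_mem al v)) => H.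
  rewrite subnn add0n INR_subn; last by lia.
  have : INR m <= INR (count_mem al v) by apply: le_INR; apply/leP.
  split; lra.
rewrite INR_addn !INR_subn; try lia.
split; lra.
Qed.

Theorem mainTheorem14 :
  forall (q : nat) (tau : R), (2 <= q)%N -> 0 <= tau ->
  exists (C : R) (N : nat),
  forall (n m : nat) (alpha : 'I_q),
    (1 <= n)%N -> (N <= n)%N ->
    INR n - tau * INR n <= INR m <= INR n + tau * INR n ->
    let kappa := (tau * INR n + INR n - INR m) / (2 * INR n) in
    kappa <= (INR q - 1) / INR q ->
    Rabs (logq q (INR (ball_count_n (const_word alpha m) (tau * INR n) n))
          - INR n * Hq q kappa)
      <= C * logq q (INR n).
Proof.
move=> q tau Hq Htau.
exists (3 + (2 + ln (INR q)) / ln 2), 2%N.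
move=> n m al H1 H2 [Hm1 Hm2]; cbv zeta; move=> Hk.
set nr := INR n in Hm1 Hm2 Hk *.
set kappa := (tau * nr + nr - INR m) / (2 * nr) in Hk *.
have Hn2 : 2 <= nr by apply: (le_INR 2); apply/leP.
have Hq2 : 2 <= INR q by apply: (le_INR 2); apply/leP.
set Y := (tau * nr + nr - INR m) / 2.
have HY0 : 0 <= Y by rewrite /Y; lra.
have Hkap : kappa * nr = Y by rewrite /kappa /Y; field; lra.
have Hkap' : kappa = Y / nr by rewrite -Hkap; field; lra.
have HYq : Y * INR q <= nr * (INR q - 1).
  rewrite -Hkap.
  have : kappa * INR q <= INR q - 1.
    have := Rmult_le_compat_r (INR q) _ _ (ltac:(lra) : 0 <= INR q) Hk.
    by have -> : (INR q - 1) / INR q * INR q = INR q - 1 by field; lra.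
  move=> H; have := Rmult_le_compat_l nr _ _ (ltac:(lra) : 0 <= nr) H; nra.
have HYn : Y <= nr - nr / INR q.
  have -> : nr - nr / INR q = nr * (INR q - 1) / INR q by field; lra.
  apply: (Rmult_le_reg_r (INR q)); first lra.
  by have -> : nr * (INR q - 1) / INR q * INR q = nr * (INR q - 1) by field; lra.
have Hnq : 0 < nr / INR q by apply: Rdiv_lt_0_compat; lra.
have [K [HK1 HK2]] := floor_ex Y HY0.
have Hcount : ball_count_n (const_word al m) (tau * nr) n =
   #|[set v : n.-tuple 'I_q | (count (predC1 al) v <= K)%N]|.
  rewrite /ball_count_n /const_word; apply: eq_card => v; rewrite !inE insdel_dist_nseq.
  have Hd := @dist_cond q al n m (val v) tau Y (size_tuple v) Hm1 (erefl Y).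
  have Hf := floor_iff (count (predC1 al) v) K Y (conj HK1 HK2).
  case: (boolP (count (predC1 al) v <= K)%N) => Hv.
    by apply: pb_true; apply/Hd/Hf.
  by apply: pb_false => /Hd /Hf; rewrite (negbTE Hv).
rewrite Hcount card_le.
have Hq0 : (0 < q)%N by lia.
have -> : (\sum_(j < K.+1) cnt q al n j)%N = (\sum_(j < K.+1) F q n j)%N.
  by apply: eq_bigr => j _; rewrite cntE.
set c := (\sum_(j < K.+1) F q n j)%N.
have HKq : (K * q <= n * (q - 1))%N.
  apply/leP; apply: INR_le; rewrite !INR_muln INR_subn /=; last by lia.
  have : INR K * INR q <= Y * INR q by apply: Rmult_le_compat_r; lra.
  rewrite -/nr; lra.
have HKn : (K < n)%N by nia.
have Hc1 := sum_F_lo q n K.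
have Hc2 := @sum_F_hi q Hq0 n K HKq.
have HT1 := binom_lo n K (ltnW HKn).
have HT2 := binom_hi n K (ltnW HKn).
have HCpos : (0 < 'C(n, K))%N by rewrite bin_gt0 ltnW.
have HFpos : (0 < F q n K)%N by rewrite /F muln_gt0 HCpos expn_gt0 subn_gt0 Hq.
have HTpos : (0 < Tm n K K)%N.
  by rewrite /Tm !muln_gt0 HCpos !expn_gt0 subn_gt0 HKn /=; case: (K).
set lC := ln (INR 'C(n, K)).
set lq1 := ln (INR q - 1).
set Kr := INR K.
set U := INR (n - K).
have HU : U = nr - Kr by rewrite /U INR_subn // ltnW.
have HU1 : 1 <= U by rewrite /U; apply: (le_INR 1); apply/leP; lia.
have lnF : ln (INR (F q n K)) = lC + Kr * lq1.
  rewrite /F ln_INR_mul // ?expn_gt0 ?ln_INR_exp; first by rewrite INR_subn.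
  - by left; lia.
  - by apply/orP; left; lia.
have lnT : ln (INR (Tm n K K)) = lC + (U * ln U + Kr * ln Kr).
  have HP1 : (0 < (n - K) ^ (n - K))%N by rewrite expn_gt0 subn_gt0 HKn.
  have HP2 : (0 < K ^ K)%N by rewrite expn_gt0; case: (K).
  have HK0 : (0 < K)%N \/ K = 0%N by case: (K) => [|k]; [right|left].
  have HnK : (0 < n - K)%N \/ (n - K = 0)%N by left; rewrite subn_gt0 HKn.
  rewrite /Tm ln_INR_mul // ?muln_gt0 ?HP1 ?HP2 // ln_INR_mul // !ln_INR_exp //.
have lnN : ln (INR (n ^ n)) = nr * ln nr by rewrite ln_INR_exp //; left; lia.
have Hn1 : ln (INR n.+1) <= ln nr + ln nr.
  rewrite -ln_mult; try lra; apply: ln_le'; rewrite ?S_INR -/nr; nra.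
have Lc1 : ln (INR (F q n K)) <= ln (INR c) by apply: ln_INR_le.
have Lc2 : ln (INR c) <= ln (INR n.+1) + ln (INR (F q n K)).
  rewrite -ln_INR_mul //; apply: ln_INR_le.
    by apply: leq_trans Hc1.
  apply: leq_trans Hc2 _; rewrite leq_mul2r; apply/orP; right; lia.
have LT1 : ln (INR (Tm n K K)) <= ln (INR (n ^ n)) by apply: ln_INR_le.
have LT2 : ln (INR (n ^ n)) <= ln (INR n.+1) + ln (INR (Tm n K K)).
  rewrite -ln_INR_mul //; apply: ln_INR_le => //; rewrite expn_gt0; apply/orP; left; lia.
have HKr1 : Kr <= Y by [].
have HKr2 : Y < Kr + 1 by [].
have HKr0 : 0 <= Kr by apply: pos_INR.
have Hlnn : ln 2 <= ln nr by apply: ln_le'; lra.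
have Hln2 : 0 < ln 2 by rewrite -ln_1; apply: ln_increasing; lra.
have Hlq1 : 0 <= lq1 by apply: ln_nonneg; lra.
have Hlq1q : lq1 <= ln (INR q) by apply: ln_le'; lra.
set V := nr - Y.
have HVpos : 0 < V by rewrite /V; lra.
have HUV : V <= U /\ U < V + 1 by rewrite HU /V; lra.
have HUn : U <= nr by rewrite HU; lra.
have HYnr : Y <= nr by lra.
have B12 : Kr * ln Kr - Y * ln Y <= 1 /\ Y * ln Y - Kr * ln Kr <= ln nr + 1.
  have Hlnr : 0 <= ln nr by apply: ln_nonneg; lra.
  case: (posnP K) => HK0.
    have HKr : Kr = 0 by rewrite /Kr HK0.
    rewrite HKr Rmult_0_l; have := small_xlnx Y (conj HY0 (ltac:(lra) : Y < 1)); lra.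
  have HK1' : 1 <= Kr by rewrite /Kr; apply: (le_INR 1); apply/leP.
  have := xlnx_mono Kr Y (ltac:(lra) : 0 < Kr) HKr1 (ltac:(lra)).
  have := xlnx_diff Kr Y nr (ltac:(lra) : 0 < Kr) HKr1 HKr2 (ltac:(lra)) HYnr.
  lra.
have B3 : U * ln U - V * ln V <= ln nr + 1.
  case: HUV => HUV1 HUV2; exact: xlnx_diff V U nr HVpos HUV1 HUV2 HU1 HUn.
have B4 : V * ln V - U * ln U <= 0.
  case: HUV => HUV1 HUV2; have := xlnx_mono V U HVpos HUV1 HU1; lra.
have B5 : 0 <= (Y - Kr) * lq1 <= lq1.
  split; first by apply: Rmult_le_pos; lra.
  have : (Y - Kr) * lq1 <= 1 * lq1 by apply: Rmult_le_compat_r; lra.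
  lra.
set nh := nr * ln nr + Y * lq1 - Y * ln Y - V * ln V.
have Hnh : nr * Defs.Hq q kappa * ln (INR q) = nh.
  have Hk1 : (INR q - 1) / INR q < 1.
    apply: (Rmult_lt_reg_r (INR q)); first lra.
    have -> : (INR q - 1) / INR q * INR q = INR q - 1 by field; lra.
    lra.
  have Hk0 : 0 <= kappa by rewrite Hkap'; apply: Rmult_le_pos; [lra | apply: Rlt_le; apply: Rinv_0_lt_compat; lra].
  rewrite Hq_form //; first (by rewrite Hkap /nh /V /lq1); lra.
have Hlq : 0 < ln (INR q) by rewrite -ln_1; apply: ln_increasing; lra.
have HC : 2 + ln (INR q) <= (2 + ln (INR q)) / ln 2 * ln nr.
  apply: (Rmult_le_reg_r (ln 2)); first lra.
  replace ((2 + ln (INR q)) / ln 2 * ln nr * ln 2) with ((2 + ln (INR q)) * ln nr) by (field; lra).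
  apply: Rmult_le_compat_l; lra.
have Habs : Rabs (ln (INR c) - nh) <= (3 + (2 + ln (INR q)) / ln 2) * ln nr.
  case: B12 => B1 B2; case: B5 => B5a B5b.
  rewrite lnT lnN in LT1 LT2; rewrite lnF in Lc1 Lc2.
  apply: Rabs_le; rewrite /nh; split; lra.
have Hnh' : nr * Defs.Hq q kappa = nh / ln (INR q) by rewrite -Hnh; field; lra.
rewrite /logq Hnh'.
have -> : ln (INR c) / ln (INR q) - nh / ln (INR q) = (ln (INR c) - nh) * / ln (INR q).
  by field; lra.
have -> : (3 + (2 + ln (INR q)) / ln 2) * (ln nr / ln (INR q)) =
          ((3 + (2 + ln (INR q)) / ln 2) * ln nr) * / ln (INR q) by field; lra.
have Hinv : 0 < / ln (INR q) by apply: Rinv_0_lt_compat.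
rewrite Rabs_mult (Rabs_right (/ ln (INR q))); last lra.
by apply: Rmult_le_compat_r; lra.
Qed.
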